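(* For any prime $p$, coefficientwise in $\mathbb{Z}[\![t]\!]$, \[ U(t) \equiv \Big( \sum_{m=0}^{[p/6]} u_{m} t^{m} \Big) U(t^{p}) \pmod{p},\qquad V(t) \equiv \Big( \sum_{m=0}^{[p/6]} (6m+1) u_{m} t^{m} \Big) U(t^{p}) \pmod{p}. \] In particular, $u_{r} \equiv 0\pmod{p}$ for all $r\ge1$ and $p\in \{2, 3, 5\}$.
   Context: For $r\ge0$ let $u_{r} = \frac{(6r)!}{(3r)!\, r!^{3}} = \binom{2r}{r} \binom{3r}{r} \binom{6r}{3r}$, and let $U(t)=\sum_{r\ge0}u_rt^r = {}_{3}F_{2}(\tfrac16,\tfrac12,\tfrac56;1,1;1728t)$ and $V(t)=\sum_{r\ge0}(6r+1)u_rt^r=(1+6t\tfrac{d}{dt})U(t)$. $[x]$ is the integer part. A congruence of formal power series modulo $N$ means all coefficients of the difference are divisible by $N$. *)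

(* Defs.v *)
From mathcomp Require Import all_boot.
Set Implicit Arguments. Unset Strict Implicit. Unset Printing Implicit Defensive.

(* u_r = (6r)!/((3r)! r!^3) = C(2r,r) C(3r,r) C(6r,3r) *)
Definition u (r : nat) : nat := (6 * r)`! %/ ((3 * r)`! * (r`!) ^ 3).

Definition Ucoef (n : nat) : nat := u n.
Definition Vcoef (n : nat) : nat := (6 * n + 1) * u n.

(* Coefficient of t^n in the formal power series
   (sum_{m=0}^{[p/6]} a m t^m) * U(t^p)
   = sum over m <= p/6 and k with m + p k = n of a m * u k. *)
Definition truncU_coef (a : nat -> nat) (p n : nat) : nat :=
  \sum_(m < (p %/ 6).+1) \sum_(k < n.+1) (if m + p * k == n then a m * u k else 0).

(* Main.v *)
Require Import Defs.
From mathcomp Require Import all_boot zify ring.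

Lemma sum_ifeq (F : nat -> nat) i n :
  \sum_(j < n) (if j == i :> nat then F j else 0) = if i < n then F i else 0.
Proof. by rewrite -big_mkcond big_ord1_eq. Qed.

Lemma lucas_step p n k : prime p ->
  'C(p + n, k) = 'C(n, k) + (if p <= k then 'C(n, k - p) else 0) %[mod p].
Proof.
move=> pp; have p0 := prime_gt0 pp.
rewrite -Vandermonde -modn_summ.
rewrite (eq_bigr (fun j : 'I_k.+1 => ((if (j:nat) == 0 then 'C(n, k - j) else 0)
     + (if (j:nat) == p then 'C(n, k - j) else 0)) %% p)); last first.
  move=> j _.
  case: (ltngtP j p) => hjp.
  - case: (posnP j) => hj0.
      by rewrite hj0 bin0 mul1n /= addn0.
    rewrite add0n mod0n.
    apply/eqP; apply: dvdn_mulr; apply: prime_dvd_bin => //; lia.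
  - have/negbTE -> : (j:nat) != 0 by lia.
    by rewrite bin_small.
  - have/negbTE -> : (j:nat) != 0 by lia.
    by rewrite hjp binn mul1n.
rewrite modn_summ big_split /= !(sum_ifeq (fun j => 'C(n, k - j))) subn0 ltnS.
by [].
Qed.

Lemma lucas p a b c d : prime p -> b < p -> d < p ->
  'C(a * p + b, c * p + d) = 'C(a, c) * 'C(b, d) %[mod p].
Proof.
move=> pp bp dp; have p0 := prime_gt0 pp.
elim: a c => [|a IH] c.
  case: c => [|c]; first by rewrite !mul0n !add0n bin0 mul1n.
  rewrite bin_small; last by lia.
  by rewrite bin0n.
rewrite mulSn -addnA lucas_step // -modnDm.
case: c => [|c].
  rewrite mul0n add0n (_ : p <= d = false); last by lia.
  rewrite mod0n addn0 modn_mod -{1}(add0n d) -(mul0n p) IH !bin0 !mul1n.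
  by [].
rewrite (_ : p <= c.+1 * p + d = true); last by lia.
rewrite (_ : c.+1 * p + d - p = c * p + d); last by lia.
rewrite IH (IH c) modnDm binS mulnDl.
by [].
Qed.

Lemma u_bin r : u r = 'C(6 * r, 3 * r) * 'C(3 * r, r) * 'C(2 * r, r).
Proof.
rewrite /u.
have e6 := @bin_fact (6 * r) (3 * r) ltac:(lia).
have e3 := @bin_fact (3 * r) r ltac:(lia).
have e2 := @bin_fact (2 * r) r ltac:(lia).
rewrite (_ : 6 * r - 3 * r = 3 * r) in e6; last by lia.
rewrite (_ : 3 * r - r = 2 * r) in e3; last by lia.
rewrite (_ : 2 * r - r = r) in e2; last by lia.
have H : 'C(6 * r, 3 * r) * 'C(3 * r, r) * 'C(2 * r, r) * ((3 * r)`! * r`! ^ 3) = (6 * r)`!.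
  rewrite -e6 -{3}e3 -e2; ring.
by rewrite -H mulnK // muln_gt0 expn_gt0 !fact_gt0.
Qed.

Lemma bin_van p a b c d : prime p -> b < d -> d < p ->
  p %| 'C(a * p + b, c * p + d).
Proof.
move=> pp bd dp; rewrite /dvdn; apply/eqP.
have bp : b < p by lia.
by rewrite lucas // (bin_small bd) muln0 mod0n.
Qed.

Lemma modMeq p x1 x2 y1 y2 : x1 = y1 %[mod p] -> x2 = y2 %[mod p] ->
  x1 * x2 = y1 * y2 %[mod p].
Proof. by move=> h1 h2; rewrite -modnMm h1 h2 modnMm. Qed.

Lemma u_lucas p k m : prime p -> m < p ->
  u (k * p + m) = (if 6 * m < p then u m * u k else 0) %[mod p].
Proof.
move=> pp mp; rewrite !u_bin.
case: ifP => h6.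
  rewrite (_ : 6 * (k * p + m) = (6 * k) * p + 6 * m); last by lia.
  rewrite (_ : 3 * (k * p + m) = (3 * k) * p + 3 * m); last by lia.
  rewrite (_ : 2 * (k * p + m) = (2 * k) * p + 2 * m); last by lia.
  have -> : 'C(6 * m,3 * m) * 'C(3 * m,m) * 'C(2 * m,m) * ('C(6 * k,3 * k) * 'C(3 * k,k) * 'C(2 * k,k)) = ('C(6  *  k, 3  *  k)  *  'C(6  *  m, 3  *  m))  *  ('C(3  *  k, k)  *  'C(3  *  m, m))
     * ('C(2 * k, k) * 'C(2 * m, m)) by ring.
  by apply: modMeq; [apply: modMeq|]; apply: lucas => //; lia.
rewrite mod0n; apply/eqP.
case: (ltnP (2 * m) p) => h2; last first.
  apply: dvdn_mull.
  rewrite (_ : 2 * (k * p + m) = (2 * k).+1 * p + (2 * m - p)); last by lia.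
  apply: bin_van => //; lia.
case: (ltnP (3 * m) p) => h3; last first.
  apply: dvdn_mulr; apply: dvdn_mull.
  rewrite (_ : 3 * (k * p + m) = (3 * k).+1 * p + (3 * m - p)); last by lia.
  apply: bin_van => //; lia.
apply: dvdn_mulr; apply: dvdn_mulr.
rewrite (_ : 6 * (k * p + m) = (6 * k).+1 * p + (6 * m - p)); last by lia.
rewrite (_ : 3 * (k * p + m) = (3 * k) * p + 3 * m); last by lia.
apply: bin_van => //; lia.
Qed.

Lemma six_neq p x : prime p -> 6 * x != p.
Proof.
move=> pp; apply/eqP => e.
have h2 : 2 %| p by rewrite -e (_ : 6 * x = 2 * (3 * x)) ?dvdn_mulr //; lia.
rewrite dvdn_prime2 // in h2.
move/eqP: h2 => h2; lia.
Qed.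

Lemma truncU_eq a p n : prime p ->
  truncU_coef a p n = if 6 * (n %% p) < p then a (n %% p) * u (n %/ p) else 0.
Proof.
move=> pp; have p0 := prime_gt0 pp; rewrite /truncU_coef.
have p6 : p %/ 6 < p by rewrite ltn_Pdiv.
rewrite (eq_bigr (fun m : 'I_(p %/ 6).+1 =>
   if (m : nat) == n %% p then a m * u (n %/ p) else 0)); last first.
  move=> m _.
  have mp : m < p by apply: leq_ltn_trans p6; rewrite -ltnS.
  have key : forall k, (m + p * k == n) = ((m : nat) == n %% p) && (k == n %/ p).
    move=> k; apply/eqP/andP.
      move=> <-; split; apply/eqP.
        by rewrite addnC mulnC modnMDl modn_small.
      by rewrite addnC mulnC divnMDl // divn_small // addn0.
    case=> /eqP -> /eqP ->.
    by rewrite mulnC addnC -divn_eq.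
  under eq_bigr => k _ do rewrite key.
  case: eqP => hm /=.
    rewrite (sum_ifeq (fun k => a m * u k)) ifT //.
    by rewrite ltnS leq_div.
  by rewrite big1.
rewrite (sum_ifeq (fun m => a m * u (n %/ p))).
congr (if _ then _ else _).
rewrite ltnS leq_divRL // mulnC leq_eqVlt.
by rewrite (negbTE (@six_neq p (n %% p) pp)).
Qed.

Theorem proposition3p1 :
  (forall p : nat, prime p ->
     (forall n : nat, Ucoef n = truncU_coef u p n %[mod p]) /\
     (forall n : nat, Vcoef n = truncU_coef (fun m => (6 * m + 1) * u m) p n %[mod p]))
  /\
  (forall p r : nat, p \in [:: 2; 3; 5] -> 1 <= r -> p %| u r).
Proof.
split.
  move=> p pp; have p0 := prime_gt0 pp; split => n; rewrite truncU_eq //.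
    by rewrite /Ucoef {1}(divn_eq n p) u_lucas // ltn_pmod.
  rewrite /Vcoef; case: ifP => h.
    rewrite -mulnA; apply: modMeq.
      rewrite {1}(divn_eq n p).
      rewrite (_ : 6 * (n %/ p * p + n %% p) + 1 = (6 * (n %/ p)) * p + (6 * (n %% p) + 1)); last by ring.
      by rewrite modnMDl.
    by rewrite {1}(divn_eq n p) u_lucas ?ltn_pmod // h.
  rewrite -modnMm {2}(divn_eq n p) u_lucas ?ltn_pmod // h.
  by rewrite mod0n muln0 mod0n.
move=> p r hp.
have [pp p5] : prime p /\ p <= 5.
  by move: hp; rewrite !inE => /orP[/eqP->|/orP[/eqP->|/eqP->]].
have p0 := prime_gt0 pp.
elim/ltn_ind: r => r IH r1.
rewrite /dvdn; apply/eqP.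
rewrite (divn_eq r p) u_lucas ?ltn_pmod //.
case: ifP => h; last by rewrite mod0n.
have m0 : r %% p = 0 by lia.
have k1 : 1 <= r %/ p.
  have := divn_eq r p; rewrite m0; lia.
have kr : r %/ p < r by rewrite ltn_Pdiv // prime_gt1.
rewrite m0 (_ : u 0 = 1) // mul1n; apply/eqP.
exact: IH.
Qed.
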